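(* There is an absolute constant $c$ such that for every positive integer $n$ and every out-directed tree $T$ on $m$ vertices, $$\mathrm{R}(\vec{P}_n,T)\le c(n+m).$$
   Context: $\vec{P}_n$ denotes the directed path on $n$ vertices. An out-directed tree is an oriented tree (underlying graph a tree, no bidirected edges) with a vertex $r$ such that all edges are directed away from $r$. $\mathrm{R}(G_1,G_2)$ is the least $N$ such that every red/blue colouring of the edges of the complete directed graph $\overleftrightarrow{K}_N$ (edge $xy$ for every ordered pair of distinct vertices) contains a red copy of $G_1$ or a blue copy of $G_2$. *)

(* Defs.v *)
From mathcomp Require Import all_boot.
Set Implicit Arguments. Unset Strict Implicit. Unset Printing Implicit Defensive.

(* A red/blue colouring of the complete directed graph on N vertices
   (vertex set 'I_N) is col : 'I_N -> 'I_N -> bool, where col x y = true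
   means the edge xy is red and false means blue (values with x = y are
   irrelevant). *)

Definition coloured_copy (N : nat) (col : 'I_N -> 'I_N -> bool) (b : bool)
  (V : finType) (e : rel V) : Prop :=
  exists f : V -> 'I_N, injective f /\
    (forall u v, e u v -> col (f u) (f v) = b).

Definition ramsey_prop (V1 : finType) (e1 : rel V1) (V2 : finType) (e2 : rel V2)
  (N : nat) : Prop :=
  forall col : 'I_N -> 'I_N -> bool,
    coloured_copy col true e1 \/ coloured_copy col false e2.

Definition dpath_rel (n : nat) : rel 'I_n := fun i j => val j == (val i).+1.

Definition undirected (V : finType) (e : rel V) : rel V :=
  fun u v => e u v || e v u.

Definition oriented_tree (V : finType) (e : rel V) : Prop :=
  [/\ 0 < #|V|,
      (forall v, ~~ e v v),
      (forall u v, ~~ (e u v && e v u)),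
      (forall u v, connect (undirected e) u v) &
      #|[set p : V * V | e p.1 p.2]| = #|V| - 1].

Definition out_tree (V : finType) (e : rel V) : Prop :=
  oriented_tree e /\ exists r : V, forall v, connect e r v.

(* Main.v *)
Require Import Defs.
From mathcomp Require Import all_boot.
Set Implicit Arguments. Unset Strict Implicit. Unset Printing Implicit Defensive.

Fixpoint Lf (T : finType) (red : rel T) (pos : T -> nat) (k : nat) (v : T) : nat :=
  if k is k'.+1 then \max_(u | red v u && (pos u < pos v)) (Lf red pos k' u).+1 else 0.

Lemma Lf_stab (T : finType) (red : rel T) (pos : T -> nat) k v :
  pos v < k -> Lf red pos k.+1 v = Lf red pos k v.
Proof.
elim: k v => [//|k IH] v hv /=.
apply: eq_bigr => u /andP[_ hu]; congr S; apply: IH.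
exact: leq_trans hu hv.
Qed.

Lemma Lf_lt (T : finType) (red : rel T) (pos : T -> nat) k x y :
  pos x < k -> red x y -> pos y < pos x -> Lf red pos k y < Lf red pos k x.
Proof.
case: k => [//|k] hx rxy hyx.
have hy : pos y < k by exact: leq_trans hyx hx.
rewrite (Lf_stab red hy) [Lf _ _ k.+1 x]/=.
by apply: (leq_bigmax_cond (F := fun u => (Lf red pos k u).+1)); rewrite rxy hyx.
Qed.

Lemma Lf_path (T : finType) (red : rel T) (pos : T -> nat) k v j :
  j <= Lf red pos k v -> exists g : nat -> T, g 0 = v /\
    forall i, i < j -> red (g i) (g i.+1) && (pos (g i.+1) < pos (g i)).
Proof.
elim: k v j => [|k IH] v j /=.
  by rewrite leqn0 => /eqP ->; exists (fun _ => v).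
case: j => [|j] hj; first by exists (fun _ => v).
have [u /andP[ru pu] hu] : exists2 u, red v u && (pos u < pos v) & j <= Lf red pos k u.
  case: (boolP [exists u, (red v u && (pos u < pos v)) && (j <= Lf red pos k u)]).
    by move=> /existsP[u /andP[h1 h2]]; exists u.
  move=> /existsPn H.
  suff : \max_(u | red v u && (pos u < pos v)) (Lf red pos k u).+1 <= j by rewrite leqNgt hj.
  apply/bigmax_leqP => u hu.
  by have := H u; rewrite hu /= -ltnNge.
have [g [g0 hg]] := IH u j hu.
exists (fun i => if i is i'.+1 then g i' else v); split => // -[|i] hi /=.
  by rewrite g0 ru pu.
exact: hg.
Qed.
Definition restr (T : finType) (red : rel T) (S : {set T}) : rel T :=
  fun a b => [&& a \in S, b \in S & red a b].

Definition upr (T : eqType) (red : rel T) (po : seq T) : rel T :=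
  fun b a => red a b && (index b po < index a po).

Lemma path_restr_all (T : finType) (red : rel T) S x p :
  path (restr red S) x p -> all (mem S) p.
Proof.
elim: p x => //= y p IH x /andP[/and3P[_ hy _] hp]; rewrite hy /=; exact: IH hp.
Qed.

Lemma path_conn_last (T : finType) (e : rel T) x p w :
  path e x p -> w \in x :: p -> connect e w (last x p).
Proof.
elim: p x w => [|y p IH] x w /=; first by rewrite inE => _ /eqP ->.
case/andP=> exy hp; rewrite inE => /orP[/eqP ->|hw]; last exact: IH.
exact: connect_trans (connect1 exy) (IH y y hp (mem_head y p)).
Qed.

Definition dfs_spec (T : finType) (red : rel T) (S Q : {set T}) (po : seq T)
  (anc : T -> seq T) :=
 [/\ uniq po, (forall x, (x \in po) = (x \in S)),
    (forall x y, x \in S -> y \in S -> red x y -> index x po < index y po -> y \in anc x),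
    (forall x, x \in S -> path (upr red po) x (anc x) && (last x (anc x) \in Q)) &
    (forall x, x \in S -> all (mem S) (anc x))].

Lemma dfs_nil (T : finType) (red : rel T) (Q : {set T}) :
  dfs_spec red set0 Q [::] (fun _ => [::]).
Proof. by split=> // x; rewrite inE. Qed.

Lemma dfs_ex (T : finType) (red : rel T) k : forall (S Q : {set T}), #|S| <= k ->
  (forall v, v \in S -> exists2 q, q \in Q :&: S & connect (restr red S) q v) ->
  exists po, exists anc, dfs_spec red S Q po anc.
Proof.
elim: k => [|k IH] S Q hS hQ.
  move: hS; rewrite leqn0 cards_eq0 => /eqP ->.
  by exists [::], (fun _ => [::]); apply: dfs_nil.
case: (set_0Vmem S) => [->|[v vS]].
  by exists [::], (fun _ => [::]); apply: dfs_nil.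
have [q qQS _] := hQ v vS.
move: qQS; rewrite inE => /andP[qQ qS].
pose R := [set w in S | connect (restr red S) q w].
pose R' := R :\ q.
pose Q' := [set u | red q u].
pose S2 := S :\: R.
have qR : q \in R by rewrite inE qS connect0.
have RS x : x \in R -> x \in S by rewrite inE => /andP[].
have Rcl x y : x \in R -> y \in S -> red x y -> y \in R.
  rewrite !inE => /andP[xS cx] yS rxy; rewrite yS /=.
  apply: connect_trans cx (connect1 _); by rewrite /restr xS yS.
have qR' : q \notin R' by rewrite !inE eqxx.
have R'S x : x \in R' -> x \in S by rewrite inE => /andP[_ /RS].
have S2S x : x \in S2 -> x \in S by rewrite inE => /andP[].
have S2R x : x \in S2 -> x \notin R by rewrite inE => /andP[].
have cardlt (A : {set T}) : (forall x, x \in A -> x \in S) -> q \notin A -> #|A| <= k.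
  move=> AS qA; rewrite -ltnS; apply: leq_trans hS.
  rewrite (cardsD1 q S) qS add1n ltnS; apply: subset_leq_card.
  by apply/subsetP => x xA; rewrite !inE AS // andbT; apply: contraNneq qA => <-.
have [po1 [anc1 [u1 m1 o31 o41 o51]]] : exists po, exists anc, dfs_spec red R' Q' po anc.
  apply: (IH R' Q'); first by apply: cardlt => //.
  move=> w wR'; move: (wR'); rewrite !inE => /andP[wq /andP[wS cw]].
  case/connectP: cw => p pp lp.
  move: wq; rewrite lp; case: (shortenP pp) => p' pp' up' _ {p pp lp wR'} wq.
  case: p' pp' up' wq => [|u p''] /=; first by rewrite eqxx.
  case/andP=> /and3P[_ uS rqu] pp'' /andP[qu up''] _.
  have allR' : all (mem R') (u :: p'').
    apply/allP=> z zp; rewrite !inE.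
    have zS : z \in S.
      move: zp; rewrite inE => /orP[/eqP ->//|zp].
      by have := path_restr_all pp''; move/allP/(_ z zp).
    rewrite zS /=; apply/andP; split.
      by apply: contraNneq qu => <-.
    apply: (path_connect (x := q) (p := u :: p'')); last by rewrite inE zp orbT.
    by rewrite /= pp'' andbT /restr qS uS rqu.
  have uR' : u \in R' := allP allR' u (mem_head _ _).
  exists u; first by rewrite inE uR' andbT inE rqu.
  apply/connectP; exists p'' => //.
  apply: (sub_in_path (P := mem R') (e := restr red S)) => //.
  by move=> a b aR bR /and3P[_ _ rab]; rewrite /restr aR bR.
have [po2 [anc2 [u2 m2 o32 o42 o52]]] : exists po, exists anc, dfs_spec red S2 Q po anc.
  apply: IH; first by apply: cardlt => //; rewrite inE qR.
  move=> w wS2; have wS := S2S w wS2; have wR := S2R w wS2.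
  have [q2 q2QS cw] := hQ w wS.
  case/connectP: cw => p pp lp.
  have allS2 : all (mem S2) (q2 :: p).
    apply/allP => z zp.
    have zS : z \in S.
      move: zp; rewrite inE => /orP[/eqP ->|zp]; first by move: q2QS; rewrite inE => /andP[].
      by have := path_restr_all pp; move/allP/(_ z zp).
    rewrite /= inE zS andbT; apply: contra wR => zR.
    have := path_conn_last pp zp; rewrite -lp => czw.
    move: zR; rewrite !inE => /andP[_ cz]; rewrite wS /=; exact: connect_trans cz czw.
  have q2S2 : q2 \in S2 := allP allS2 q2 (mem_head _ _).
  exists q2; first by rewrite inE q2S2 andbT; move: q2QS; rewrite inE => /andP[].
  apply/connectP; exists p => //.
  apply: (sub_in_path (P := mem S2) (e := restr red S)) => //.
  by move=> a b aR bR /and3P[_ _ rab]; rewrite /restr aR bR.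
pose po := po1 ++ q :: po2.
pose anc x := if x \in R' then rcons (anc1 x) q else if x == q then [::] else anc2 x.
have S2R' x : x \in S2 -> x \notin R'.
  by move=> /S2R; apply: contra; rewrite inE => /andP[].
have S2q x : x \in S2 -> x != q by move=> /S2R; apply: contraNneq => ->.
have idx1 x : x \in R' -> index x po = index x po1.
  by move=> xR; rewrite /po index_cat m1 xR.
have idxq : index q po = size po1.
  by rewrite /po index_cat m1 (negbTE qR') /= eqxx addn0.
have idx2 x : x \in S2 -> index x po = size po1 + (index x po2).+1.
  move=> x2; rewrite /po index_cat m1 (negbTE (S2R' x x2)) /=.
  by rewrite eq_sym (negbTE (S2q x x2)).
have lt1 x : x \in R' -> index x po < size po1.
  by move=> xR; rewrite idx1 // index_mem m1.
have cases x : x \in S -> [\/ x \in R', x = q | x \in S2].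
  move=> xS; case: (boolP (x \in R)) => xR.
    case: (eqVneq x q) => [->|xq]; first by constructor 2.
    by constructor 1; rewrite in_setD1 xq xR.
  by constructor 3; rewrite inE xR xS.
exists po, anc; split.
- rewrite /po cat_uniq u1 /= u2 m1 (negbTE qR') m2 inE /= andbT.
  apply/andP; split; last by rewrite qR.
  by apply/hasPn => x; rewrite m2 => x2; rewrite /= m1 S2R'.
- move=> x; rewrite /po mem_cat inE m1 m2.
  apply/idP/idP.
    by case/orP=> [/R'S//|/orP[/eqP->//|/S2S//]].
  by move/cases=> [->|->|->]; rewrite ?eqxx ?orbT.
- move=> x y xS yS rxy.
  case: (cases x xS) => [xR|xq|x2].
  + have xR0 : x \in R by move: xR; rewrite in_setD1 => /andP[].
    have yR := Rcl x y xR0 yS rxy.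
    rewrite /anc xR mem_rcons inE.
    case: (eqVneq y q) => [//|yq] /=.
    have yR' : y \in R' by rewrite in_setD1 yq yR.
    rewrite idx1 // idx1 // => hlt; exact: o31.
  + subst x => hlt; exfalso.
    have yR := Rcl q y qR yS rxy.
    case: (cases y yS) => [yR'|yq|y2].
    * by move: hlt; rewrite idxq ltnNge ltnW // lt1.
    * by move: hlt; rewrite yq ltnn.
    * by move: (S2R y y2); rewrite yR.
  + move=> hlt; rewrite /anc (negbTE (S2R' x x2)) (negbTE (S2q x x2)).
    case: (cases y yS) => [yR'|yq|y2].
    * by move: hlt; rewrite idx2 // ltnNge ltnW // (leq_trans (lt1 y yR')) // leq_addr.
    * by move: hlt; rewrite yq idxq idx2 // ltnNge leq_addr.
    * move: hlt; rewrite !idx2 // ltn_add2l ltnS => hlt; exact: o32.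
- move=> x xS; case: (cases x xS) => [xR|->|x2].
  + rewrite /anc xR last_rcons qQ andbT rcons_path.
    have /andP[hp hl] := o41 x xR.
    apply/andP; split.
      apply: (sub_in_path (P := mem R') (e := upr red po1)) => //.
        move=> a b aR bR; rewrite /upr idx1 // idx1 //.
      apply/allP => z; rewrite inE => /orP[/eqP->//|]; exact: (allP (o51 x xR)).
    rewrite /upr idxq; move: hl; rewrite inE => -> /=.
    have : last x (anc1 x) \in x :: anc1 x by exact: mem_last.
    rewrite inE => /orP[/eqP->|la]; first exact: lt1.
    by apply: lt1; move/allP: (o51 x xR); apply.
  + by rewrite /anc (negbTE qR') eqxx /=.
  + rewrite /anc (negbTE (S2R' x x2)) (negbTE (S2q x x2)).
    have /andP[hp hl] := o42 x x2; rewrite hl andbT.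
    apply: (sub_in_path (P := mem S2) (e := upr red po2)) => //.
      by move=> a b aR bR; rewrite /upr !idx2 // ltn_add2l ltnS.
    apply/allP => z; rewrite inE => /orP[/eqP->//|]; exact: (allP (o52 x x2)).
- move=> x xS; case: (cases x xS) => [xR|->|x2].
  + rewrite /anc xR all_rcons; apply/andP; split; first exact: qS.
    by apply/allP => z /(allP (o51 x xR)) /R'S.
  + by rewrite /anc (negbTE qR') eqxx.
  + rewrite /anc (negbTE (S2R' x x2)) (negbTE (S2q x x2)).
    by apply/allP => z /(allP (o52 x x2)) /S2S.
Qed.
Lemma conn_exit (V : finType) (e : rel V) (D : {set V}) r w :
  connect e r w -> r \in D -> w \notin D -> exists a b, [/\ a \in D, b \notin D & e a b].
Proof.
case/connectP => p pp ->{w}.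
elim: p r pp => [|y p IH] r /=; first by move=> _ rD; rewrite rD.
case/andP => ery pp rD.
case: (boolP (y \in D)) => yD; first exact: IH.
by move=> _; exists r, y.
Qed.

Lemma cardT1 (V : finType) (r : V) : #|[set: V] :\ r| = #|V| - 1.
Proof. by rewrite -cardsT (cardsD1 r [set: V]) in_setT add1n subn1. Qed.

Lemma out_tree_facts (V : finType) (e : rel V) : out_tree e ->
  exists r, [/\ forall v, connect e r v, forall u, ~~ e u r,
     forall u u' v, e u v -> e u' v -> u = u' & forall v, ~~ e v v].
Proof.
case=> [[h0 irr _ _ hE] [r hr]]; exists r; split => //.
- have inarc v : v != r -> exists u, e u v.
    move=> vr; case/connectP: (hr v) => p pp lp.
    case/lastP: p pp lp => [|p' y]; first by move=> _ vr'; rewrite vr' eqxx in vr.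
    by rewrite rcons_path last_rcons => /andP[_ h] ->; exists (last r p').
  pose E := [set p : V * V | e p.1 p.2].
  pose I := [set p.2 | p in E].
  have IE : #|I| <= #|E| by apply: leq_imset_card.
  have sub : [set: V] :\ r \subset I.
    apply/subsetP => v; rewrite !inE andbT => vr.
    have [u euv] := inarc v vr; apply/imsetP; exists (u, v) => //; by rewrite inE.
  have cI : #|V| - 1 <= #|I|.
    by have := subset_leq_card sub; rewrite cardT1.
  move=> u; apply/negP => eur.
  have : r \in I by apply/imsetP; exists (u, r) => //; rewrite inE.
  move=> rI.
  have : [set: V] \subset I.
    apply/subsetP => v _; case: (eqVneq v r) => [->//|vr].
    by apply: (subsetP sub); rewrite !inE vr.
  move/subset_leq_card; rewrite cardsT => h.
  have := leq_trans h (leq_trans IE (eq_leq hE)).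
  by rewrite leqNgt ltn_subrL h0.
- move=> u u' v euv eu'v.
  pose E := [set p : V * V | e p.1 p.2].
  pose I := [set p.2 | p in E].
  have IE : #|I| <= #|E| by apply: leq_imset_card.
  have inarc w : w != r -> exists u, e u w.
    move=> vr; case/connectP: (hr w) => p pp lp.
    case/lastP: p pp lp => [|p' y]; first by move=> _ vr'; rewrite vr' eqxx in vr.
    by rewrite rcons_path last_rcons => /andP[_ h] ->; exists (last r p').
  have sub : [set: V] :\ r \subset I.
    apply/subsetP => w; rewrite !inE andbT => vr.
    have [z ezw] := inarc w vr; apply/imsetP; exists (z, w) => //; by rewrite inE.
  have cI : #|E| <= #|I|.
    by have := subset_leq_card sub; rewrite cardT1 hE.
  have /imset_injP inj : #|I| == #|E| by rewrite eqn_leq IE cI.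
  have := inj (u, v) (u', v); rewrite !inE => /(_ euv eu'v erefl).
  by case.
Qed.
Lemma embed (V : finType) (e : rel V) (W : finType) (blue : rel W)
  (lay : W -> nat) (K : nat) (anc : W -> seq W) :
  out_tree e -> (forall w, lay w < K) ->
  (forall x y, y != x -> lay x <= lay y -> y \notin anc x -> blue x y) ->
  (forall x a b, a \in anc x -> b \in anc x -> lay a = lay b -> a = b) ->
  #|V| + K <= #|W| ->
  exists f : V -> W, injective f /\ (forall u v, e u v -> blue (f u) (f v)).
Proof.
move=> hT hlay hblue hanc hcard.
have [r [hr hnr hpar hirr]] := out_tree_facts hT.
have V0 : 0 < #|V| by case: hT => [[]].
have [w0 _] : exists w0 : W, true.
  by have /card_gt0P[w _] : 0 < #|W| by apply: leq_trans hcard; rewrite addn_gt0 V0.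
pose y0 := [arg min_(y < w0) lay y].
have y0min : forall y, lay y0 <= lay y.
  by rewrite /y0; case: arg_minnP => // z _ hz y; exact: hz.
pose Inv k (D : {set V}) (f : V -> W) := [/\ #|D| = k, r \in D,
  (forall u v, e u v -> v \in D -> u \in D),
  ({in D &, injective f}) &
  ((forall u v, u \in D -> v \in D -> e u v -> blue (f u) (f v)) /\
  (forall u, u \in D -> forall a b, a \notin f @: D -> b \notin f @: D ->
     lay a = lay b -> lay a < lay (f u) -> a = b))].
have main : forall k, k < #|V| -> exists D, exists f, Inv k.+1 D f.
  elim=> [_|k IH hk].
    exists [set r], (fun _ => y0); split.
    - exact: cards1.
    - exact: set11.
    - by move=> u v euv; rewrite inE => /eqP vr; rewrite vr (negbTE (hnr u)) in euv.
    - by move=> u v; rewrite !inE => /eqP -> /eqP ->.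
    split.
    - by move=> u v; rewrite !inE => /eqP -> /eqP ->; rewrite (negbTE (hirr r)).
    - by move=> u _ a b _ _ _; rewrite ltnNge y0min.
  have [D [f [hD rD pc inj [arcs inv]]]] := IH (ltnW hk).
  have [w wD] : exists w, w \notin D.
    case: (pickP (fun w => w \notin D)) => [w wD|H]; first by exists w.
    have : [set: V] \subset D by apply/subsetP => w _; have := H w; move/negbFE.
    by move/subset_leq_card; rewrite cardsT hD leqNgt hk.
  have [a [b [aD bD eab]]] := conn_exit (hr w) rD wD.
  pose x := f a.
  have xU : x \in f @: D by apply: imset_f.
  case: (boolP [exists y1, exists y2, [&& y1 != y2, y1 \notin f @: D, y2 \notin f @: D,
            lay y1 == lay y2 & lay x <= lay y1]]) => [hex|hnex]; last first.
    exfalso.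
    have injU : {in ~: (f @: D) &, injective lay}.
      move=> y1 y2; rewrite !inE => u1 u2 hl.
      case: (leqP (lay x) (lay y1)) => hxl.
        apply/eqP; apply: contraNT hnex => hne.
        by apply/existsP; exists y1; apply/existsP; exists y2; rewrite hne u1 u2 hxl hl eqxx.
      exact: (inv a aD y1 y2 u1 u2 hl hxl).
    pose layO (w : W) : 'I_K := Ordinal (hlay w).
    have : #|layO @: (~: (f @: D))| = #|~: (f @: D)|.
      apply: card_in_imset => y1 y2 h1 h2 /(congr1 val) /= hl; exact: injU.
    have : #|layO @: (~: (f @: D))| <= K by apply: leq_trans (max_card _) _; rewrite card_ord.
    move=> h1 h2; rewrite h2 in h1.
    have := cardsC (f @: D); rewrite (card_in_imset inj) hD => hC.
    have : #|W| <= k.+1 + K by rewrite -hC leq_add2l.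
    move=> h3; have := leq_trans hcard h3; rewrite leq_add2r leqNgt hk //.
  have exj : exists j, (lay x <= j) && [exists y1, exists y2,
      [&& y1 != y2, y1 \notin f @: D, y2 \notin f @: D, lay y1 == j & lay y2 == j]].
    case/existsP: hex => y1 /existsP[y2 /and5P[h1 h2 h3 /eqP h4 h5]].
    exists (lay y1); rewrite h5 /=; apply/existsP; exists y1; apply/existsP; exists y2.
    by rewrite h1 h2 h3 h4 eqxx.
  case: (ex_minnP exj) => j /andP[hxj /existsP[y1 /existsP[y2 /and5P[n12 u1 u2 /eqP l1 /eqP l2]]]] jmin.
  pose y := if y1 \in anc x then y2 else y1.
  have yU : y \notin f @: D by rewrite /y; case: ifP.
  have ly : lay y = j by rewrite /y; case: ifP.
  have yanc : y \notin anc x.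
    rewrite /y; case: ifP => h; last by rewrite h.
    apply/negP => h'.
    have := hanc x y1 y2 h h'; rewrite l1 l2 => /(_ erefl) e12.
    by rewrite e12 eqxx in n12.
  have bxy : blue x y.
    apply: hblue; [by apply: contraNneq yU => -> | by rewrite ly | exact: yanc].
  pose f' := fun v => if v == b then y else f v.
  have f'D v : v \in D -> f' v = f v.
    by move=> vD; rewrite /f' ifN //; apply: contraNneq bD => <-.
  have imD : f' @: (b |: D) = y |: f @: D.
    rewrite imsetU1 /f' eqxx; congr (_ |: _); apply: eq_in_imset => v vD.
    exact: f'D.
  exists (b |: D), f'; split.
  - by rewrite cardsU1 bD hD.
  - by rewrite inE rD orbT.
  - move=> u v euv; rewrite !inE => /orP[/eqP vb|vD].
      by rewrite vb in euv; rewrite (hpar _ _ _ euv eab) aD orbT.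
    by rewrite (pc _ _ euv vD) orbT.
  - move=> u v; rewrite !inE => /orP[/eqP ->|uD] /orP[/eqP ->|vD] //.
    + rewrite (f'D v vD) /f' eqxx => h; by move: yU; rewrite h imset_f.
    + rewrite (f'D u uD) /f' eqxx => h; by move: yU; rewrite -h imset_f.
    + by rewrite !f'D //; apply: inj.
  split.
  - move=> u v; rewrite !inE => /orP[/eqP ->|uD] /orP[/eqP ->|vD] euv.
    + by rewrite (negbTE (hirr b)) in euv.
    + by move: bD; rewrite (pc _ _ euv vD).
    + by rewrite (hpar _ _ _ euv eab) (f'D a aD) /f' eqxx.
    + by rewrite !f'D //; apply: arcs.
  - move=> u; rewrite imD !inE => huD a' b'; rewrite !inE !negb_or => /andP[_ ua] /andP[_ ub] hl.
    case/orP: huD => [/eqP ->|uD]; last first.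
      by rewrite f'D //; apply: inv.
    rewrite /f' eqxx ly => hlt.
    case: (leqP (lay x) (lay a')) => hxl; last exact: (inv a aD a' b' ua ub hl hxl).
    apply/eqP; apply: contraTT hlt => hne; rewrite -leqNgt; apply: jmin.
    rewrite hxl /=; apply/existsP; exists a'; apply/existsP; exists b'.
    by rewrite hne ua ub hl eqxx.
have hV : #|V|.-1 < #|V| by rewrite ltn_predL.
have [D [f [hD _ _ inj [arcs _]]]] := main _ hV.
have DT : D = setT.
  by apply/eqP; rewrite eqEcard subsetT cardsT hD /= prednK.
exists f; split.
- by move=> u v; apply: inj; rewrite DT.
- by move=> u v; apply: arcs; rewrite DT.
Qed.
Lemma path_lt_inj (T : eqType) (L : T -> nat) x s a b :
  path (fun u v => L u < L v) x s -> a \in s -> b \in s -> L a = L b -> a = b.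
Proof.
elim: s x => //= c s IH x /andP[_ hp].
have hall : all (fun v => L c < L v) s.
  by apply: order_path_min hp => u v w h1 h2; exact: ltn_trans h1 h2.
rewrite !inE => /orP[/eqP->|ha] /orP[/eqP->|hb] //.
- by move=> e; have := allP hall b hb; rewrite e ltnn.
- by move=> e; have := allP hall a ha; rewrite -e ltnn.
- exact: IH hp ha hb.
Qed.

Theorem mainTheorem15 :
  exists c : nat, forall (n : nat) (V : finType) (e : rel V),
    0 < n -> out_tree e ->
    exists N, N <= c * (n + #|V|) /\ ramsey_prop (@dpath_rel n) e N.
Proof.
exists 1 => n V e n0 hT; exists (n + #|V|); split; first by rewrite mul1n.
move=> col.
pose red : rel 'I_(n + #|V|) := fun x y => col x y.
have [po [anc [upo m o3 o4 o5]]] : exists po anc, dfs_spec red setT setT po anc.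
  apply: (@dfs_ex _ red #|[set: 'I_(n + #|V|)]|) => // v _.
  by exists v; [rewrite !inE | exact: connect0].
pose pos := fun x => index x po.
have inpo x : x \in po by rewrite m inE.
have possz x : pos x < size po by rewrite /pos index_mem.
pose L := Lf red pos (size po).
have Llt x y : red x y -> pos y < pos x -> L y < L x.
  by move=> rxy hyx; apply: Lf_lt.
case: (boolP [exists v, n.-1 <= L v]) => [/existsP[v hv]|hno].
- left.
  have [g [g0 hg]] := Lf_path hv.
  have dec : forall a b, a < b -> b <= n.-1 -> pos (g b) < pos (g a).
    move=> a; elim=> // b IH ab bn.
    have hb : b < n.-1 by exact: leq_trans (ltnSn b) bn.
    have /andP[_ h] := hg b hb.
    rewrite ltnS leq_eqVlt in ab; case/orP: ab => [/eqP->//|ab].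
    exact: ltn_trans h (IH ab (ltnW hb)).
  exists (fun i : 'I_n => g i); split.
  + move=> i j hij; apply/val_inj/eqP; apply/negP => hne.
    have ilt : (i : nat) <= n.-1 by rewrite -ltnS prednK.
    have jlt : (j : nat) <= n.-1 by rewrite -ltnS prednK.
    case: (ltngtP i j) hne => // h _.
    * by have := dec _ _ h jlt; rewrite hij ltnn.
    * by have := dec _ _ h ilt; rewrite hij ltnn.
  + move=> i j; rewrite /dpath_rel => /eqP hj.
    have hi : (i : nat) < n.-1 by rewrite -ltnS prednK // -hj ltn_ord.
    rewrite /= hj; case/andP: (hg i hi) => h _; exact: h.
- right.
  have hlay w : L w < n.-1 by move/existsPn: hno => /(_ w); rewrite -ltnNge.
  have E1 : forall x y, y != x -> L x <= L y -> y \notin anc x -> ~~ col x y.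
    move=> x y yx hxy ya; apply/negP => cxy.
    case: (ltngtP (pos x) (pos y)) => h.
    * by move: ya; rewrite (o3 x y (in_setT _) (in_setT _) cxy h).
    * by move: hxy; rewrite leqNgt Llt.
    * by move: yx; rewrite (index_inj x (inpo x) (inpo y) h) eqxx.
  have E2 : forall x a b, a \in anc x -> b \in anc x -> L a = L b -> a = b.
    move=> x a b ha hb hl.
    have /andP[hp _] := o4 x (in_setT _).
    have hp' : path (fun u v => L u < L v) x (anc x).
      apply: sub_path hp => b' a' /andP[r1 r2]; exact: Llt.
    exact: path_lt_inj hp' ha hb hl.
  have E3 : #|V| + n.-1 <= #|'I_(n + #|V|)| by rewrite card_ord addnC leq_add2r leq_pred.
  have [f [finj fe]] := @embed V e _ (fun x y => ~~ col x y) L n.-1 anc hT hlay E1 E2 E3.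
  by exists f; split => // u v /fe /negbTE.
Qed.
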